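(* Let $M=B\circ S$ with $S$ subsampling without replacement with batch size $q$, let the dataset relation be substitution $\simeq_\Delta$ and the batch relation be insertion/removal $\simeq_\pm$ with induced distance $d_\pm$. Then for every $\alpha>1$ and all datasets $x\simeq_\Delta x'$ of size $N$, $$\Lambda_\alpha(m_x\|m_{x'})\le\max_{y^{(1)}_1,y^{(1)}_2,y^{(2)}_1,y^{(2)}_2\in\mathbb Y}\Lambda_\alpha\big((1-w)b_{y^{(1)}_1}+w\,b_{y^{(1)}_2}\ \big\|\ (1-w)b_{y^{(2)}_1}+w\,b_{y^{(2)}_2}\big)$$ subject to $y^{(1)}_1=y^{(2)}_1$, $d_\pm(y^{(1)}_1,y^{(1)}_2)\le2$, $d_\pm(y^{(1)}_1,y^{(2)}_2)\le2$, $d_\pm(y^{(1)}_2,y^{(2)}_2)\le2$, where $w=q/N$.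
   Context: Finite set $\mathbb A$, datasets are subsets of $\mathbb A$ with more than $q$ elements; the batch space $\mathbb Y$ consists of subsets of size $q$ (of datasets). Subsampling without replacement: $s_x(y)=\binom{|x|}{q}^{-1}$ for $y\subseteq x$, $|y|=q$. $B$ assigns a density $b_y$ on $\mathbb R^D$ to each batch; $m_x=\sum_y b_y s_x(y)$. $x\simeq_\Delta x'$ iff $x'=(x\setminus\{a\})\cup\{a'\}$ with $a\in x$, $a'\notin x$. $y\simeq_\pm y'$ iff one is obtained from the other by inserting or removing one element; $d_\pm$ is the induced distance (length of shortest chain of neighbors, measured through arbitrary finite subsets of $\mathbb A$). $\Lambda_\alpha(p\|q)=\int p^\alpha q^{1-\alpha}dz$. *)

(* Defs.v *)
From HB Require Import structures.
From mathcomp Require Import all_boot all_order all_algebra.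
From mathcomp Require Import all_classical all_reals all_analysis.
Set Implicit Arguments. Unset Strict Implicit. Unset Printing Implicit Defensive.
Import Order.TTheory GRing.Theory Num.Theory.
Local Open Scope classical_set_scope.
Local Open Scope ring_scope.

(* pointwise integrand p^a q^(1-a) of Lambda_a(p||q), for a > 1,
   with the standard conventions 0^a * q^(1-a) = 0 and p^a * 0^(1-a) = +oo (p>0) *)
Definition renyi_pt (R : realType) (a p q : R) : \bar R :=
  if p == 0 then 0%E
  else if q == 0 then +oo%E
  else ((p `^ a) * (q `^ (1 - a)))%:E.

Definition Lambda (R : realType) (d : measure_display) (T : measurableType d)
  (mu : {measure set T -> \bar R}) (a : R) (p q : T -> R) : \bar R :=
  (\int[mu]_(z in setT) renyi_pt a (p z) (q z))%E.

Definition is_density (R : realType) (d : measure_display) (T : measurableType d)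
  (mu : {measure set T -> \bar R}) (f : T -> R) : Prop :=
  measurable_fun setT f /\ (forall z, 0 <= f z) /\
  (\int[mu]_(z in setT) (f z)%:E = 1)%E.

(* subsampled mechanism m_x = sum_y b_y s_x(y), s_x(y) = 1 / C(|x|, q)
   for y \subset x with |y| = q (subsampling without replacement) *)
Definition subsampled (R : realType) (A : finType) (T : Type) (q : nat)
  (b : {set A} -> T -> R) (x : {set A}) : T -> R :=
  fun z => \sum_(y : {set A} | (y \subset x) && (#|y| == q))
             b y z * ('C(#|x|, q)%:R)^-1.

Definition subst_rel (A : finType) (x x' : {set A}) : Prop :=
  exists a a', [/\ a \in x, a' \notin x & x' = a' |: (x :\ a)].

Definition pm_nbr (A : finType) (y y' : {set A}) : Prop :=
  (exists a, a \notin y /\ y' = a |: y) \/ (exists a, a \in y /\ y' = y :\ a).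

(* dpm_le n y y' <-> d_pm(y, y') <= n, i.e. there is a chain of at most n
   ~_pm-steps from y to y' through arbitrary (finite) subsets of A *)
Fixpoint dpm_le (A : finType) (n : nat) (y y' : {set A}) : Prop :=
  match n with
  | 0 => y = y'
  | n'.+1 => dpm_le n' y y' \/ exists z, dpm_le n' y z /\ pm_nbr z y'
  end.

Definition mix (R : realType) (T : Type) (w : R) (f g : T -> R) : T -> R :=
  fun z => (1 - w) * f z + w * g z.

(* Main.v *)
Require Import Defs.
From HB Require Import structures.
From mathcomp Require Import all_boot all_order all_algebra.
From mathcomp Require Import all_classical all_reals all_analysis.
From mathcomp Require Import ring lra zify measurable_realfun.
Import Order.TTheory GRing.Theory Num.Theory.
Local Open Scope classical_set_scope.
Local Open Scope ring_scope.

Section Analytic.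
Variable R : realType.
Implicit Types (a p q l : R).

Lemma powR_div (x y a : R) : 0 <= x -> 0 < y -> (x / y) `^ a = x `^ a / y `^ a.
Proof.
move=> x0 y0; rewrite powRM //; last by rewrite invr_ge0 ltW.
congr (_ * _).
rewrite -powR_inv1 ?ltW // -powRrM mulN1r powRN //.
Qed.

Lemma key_id (x y a : R) : 0 <= x -> 0 < y -> x `^ a * y `^ (1 - a) = y * (x / y) `^ a.
Proof.
move=> x0 y0; rewrite powR_div // powRB; last by apply/implyP => _; rewrite gt_eqF.
rewrite powRr1; last exact: ltW.
by rewrite mulrCA.
Qed.

Lemma key (a p1 p2 q1 q2 : R) : 1 < a -> 0 <= p1 -> 0 <= p2 -> 0 < q1 -> 0 < q2 ->
  (p1+p2) `^ a * (q1+q2) `^ (1-a) <= p1 `^ a * q1 `^ (1-a) + p2 `^ a * q2 `^ (1-a).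
Proof.
move=> a1 p10 p20 q10 q20.
have s0 : 0 < q1 + q2 by rewrite addr_gt0.
rewrite !key_id ?addr_ge0 //.
have t0 : 0 <= q1 / (q1 + q2) by rewrite divr_ge0 ?ltW.
have t1 : q1 / (q1 + q2) <= 1 by rewrite ler_pdivrMr // mul1r lerDl ltW.
have H := convex_powR (ltW a1) (Itv01 t0 t1).
have m1 : p1 / q1 \in (`[0, +oo[%classic : set R).
  by rewrite inE /= in_itv /= andbT divr_ge0 // ltW.
have m2 : p2 / q2 \in (`[0, +oo[%classic : set R).
  by rewrite inE /= in_itv /= andbT divr_ge0 // ltW.
have := H (p1 / q1) (p2 / q2) m1 m2.
rewrite convRE [X in X `^ _ <= _]convRE /=.
have e : unstable.onem (q1 / (q1 + q2)) = q2 / (q1 + q2).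
  by rewrite /unstable.onem; field; rewrite gt_eqF.
rewrite e.
have e2 : q1 / (q1 + q2) * (p1 / q1) + q2 / (q1 + q2) * (p2 / q2) = (p1 + p2) / (q1 + q2).
  by field; rewrite ?gt_eqF // lt0r_neq0.
rewrite e2 => Hc.
rewrite -(ler_pM2l s0) in Hc.
apply: (le_trans Hc).
by rewrite le_eqVlt; apply/orP; left; apply/eqP; field; rewrite gt_eqF.
Qed.

Local Open Scope ereal_scope.

Lemma renyi_ge0 a p q : 0 <= renyi_pt a p q.
Proof.
rewrite /renyi_pt; case: ifP => _ //; case: ifP => _ //.
by rewrite lee_fin mulr_ge0 // powR_ge0.
Qed.

Lemma renyi_pos a p q : (a != 0)%R -> (0 < q)%R -> renyi_pt a p q = (p `^ a * q `^ (1 - a))%:E.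
Proof.
move=> a0 q0; rewrite /renyi_pt (gt_eqF q0); case: ifPn => // /eqP ->.
by rewrite powR0 // mul0r.
Qed.

Lemma renyi_hom a p q l : (0 < l)%R -> (0 <= p)%R -> (0 <= q)%R ->
  renyi_pt a (l * p) (l * q) = l%:E * renyi_pt a p q.
Proof.
move=> l0 p0 q0; rewrite /renyi_pt !mulf_eq0 (gt_eqF l0) /=.
case: ifP => _; first by rewrite mule0.
case: ifP => _; first by rewrite gt0_muley ?lte_fin.
rewrite -EFinM; congr (_%:E).
rewrite !powRM // ?(ltW l0) //.
rewrite mulrACA -powRD; last by apply/implyP => _; rewrite gt_eqF.
by rewrite addrC subrK powRr1 // ltW.
Qed.

Lemma renyi0l a q : renyi_pt a 0 q = 0.
Proof. by rewrite /renyi_pt eqxx. Qed.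

Lemma renyiy a p : (p != 0)%R -> renyi_pt a p 0 = +oo.
Proof. by move=> p0; rewrite /renyi_pt (negbTE p0) eqxx. Qed.

Lemma le_addy (e r : \bar R) : 0 <= r -> e <= +oo + r.
Proof. by case: r => [r||] //= _; rewrite ?leey. Qed.

Lemma renyi_sub a p1 p2 q1 q2 : (1 < a)%R -> (0 <= p1)%R -> (0 <= p2)%R ->
  (0 <= q1)%R -> (0 <= q2)%R ->
  renyi_pt a (p1 + p2) (q1 + q2) <= renyi_pt a p1 q1 + renyi_pt a p2 q2.
Proof.
move=> a1 p10 p20 q10 q20.
have a0 : (a != 0)%R by rewrite gt_eqF // (lt_trans _ a1).
have [P0|P0] := eqVneq (p1 + p2)%R 0%R.
  by rewrite P0 renyi0l adde_ge0 // renyi_ge0.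
have [Q1|Q1] := eqVneq q1 0%R.
  subst q1; have [P1|P1] := eqVneq p1 0%R.
    by subst p1; rewrite !add0r renyi0l add0e.
  by rewrite (@renyiy a p1 P1) le_addy // renyi_ge0.
have [Q2|Q2] := eqVneq q2 0%R.
  subst q2; have [P2|P2] := eqVneq p2 0%R.
    by subst p2; rewrite !addr0 renyi0l adde0.
  by rewrite (@renyiy a p2 P2) addeC le_addy // renyi_ge0.
have q1p : (0 < q1)%R by rewrite lt0r Q1.
have q2p : (0 < q2)%R by rewrite lt0r Q2.
rewrite !renyi_pos // ?addr_gt0 // -EFinD lee_fin; exact: key.
Qed.

Lemma renyi_sum a (I : Type) (s : seq I) (P Q : I -> R) : (1 < a)%R ->
  (forall i, 0 <= P i)%R -> (forall i, 0 <= Q i)%R ->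
  renyi_pt a (\sum_(i <- s) P i)%R (\sum_(i <- s) Q i)%R <= \sum_(i <- s) renyi_pt a (P i) (Q i).
Proof.
move=> a1 P0 Q0; elim: s => [|i s IH]; first by rewrite !big_nil renyi0l.
rewrite !big_cons; apply: le_trans; first apply: (renyi_sub _ _ _ _ _ a1) => //.
- by rewrite sumr_ge0.
- by rewrite sumr_ge0.
- by rewrite leeD2l.
Qed.

End Analytic.

Section M.
Variables (R : realType) (d : measure_display) (T : measurableType d).
Lemma renyi_meas a (f g : T -> R) : measurable_fun setT f -> measurable_fun setT g ->
  measurable_fun setT ((fun z => renyi_pt a (f z) (g z)) : T -> \bar R).
Proof.
move=> mf mg; rewrite /renyi_pt.
apply: measurable_fun_ifT.
  exact: (measurable_fun_eqr mf (measurable_cst _)).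
  exact: measurable_cst.
apply: measurable_fun_ifT.
  exact: (measurable_fun_eqr mg (measurable_cst _)).
  exact: measurable_cst.
apply/measurable_EFinP.
apply: measurable_funM.
  exact: (measurableT_comp (measurable_powR a) mf).
exact: (measurableT_comp (measurable_powR _) mg).
Qed.
End M.

Section L.
Variables (R : realType) (d : measure_display) (T : measurableType d)
  (mu : {measure set T -> \bar R}).
Local Open Scope ereal_scope.

Lemma measurable_scale (l : R) (f : T -> R) : measurable_fun setT f ->
  measurable_fun setT (fun z => l * f z)%R.
Proof. by move=> mf; apply: measurable_funM => //; exact: measurable_cst. Qed.

Lemma Lambda_sum a (I : Type) (s : seq I) (l : R) (P Q : I -> T -> R) :
  (1 < a)%R -> (0 < l)%R ->
  (forall i, measurable_fun setT (P i)) -> (forall i, measurable_fun setT (Q i)) ->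
  (forall i z, 0 <= P i z)%R -> (forall i z, 0 <= Q i z)%R ->
  Lambda mu a (fun z => \sum_(i <- s) l * P i z)%R (fun z => \sum_(i <- s) l * Q i z)%R
  <= \sum_(i <- s) l%:E * Lambda mu a (P i) (Q i).
Proof.
move=> a1 l0 mP mQ P0 Q0; rewrite /Lambda.
have H1 : \int[mu]_(z in setT) renyi_pt a (\sum_(i <- s) l * P i z)%R (\sum_(i <- s) l * Q i z)%R
   <= \int[mu]_(z in setT) \sum_(i <- s) renyi_pt a (l * P i z)%R (l * Q i z)%R.
  apply: ge0_le_integral => //.
  - by move=> z _; exact: renyi_ge0.
  - by apply: renyi_meas; apply: measurable_sum => i; exact: measurable_scale.
  - apply: emeasurable_sum => i; apply: renyi_meas; exact: measurable_scale.
  - move=> z _; apply: renyi_sum => // i; apply: mulr_ge0 => //; exact: ltW.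
apply: (le_trans H1).
rewrite ge0_integral_sum //; last 2 first.
  - move=> i; apply: renyi_meas; exact: measurable_scale.
  - by move=> i z _; exact: renyi_ge0.
apply: lee_sum => i _.
under eq_integral do rewrite renyi_hom //.
rewrite ge0_integralZl_EFin //; last exact: ltW.
- by move=> z _; exact: renyi_ge0.
- exact: renyi_meas.
Qed.
End L.

Section Sets.
Variable A : finType.
Implicit Types (x y : {set A}) (a e : A).

Lemma pred_equiv x a e y q : a \in x ->
  [&& e |: (y :\ a) \subset x :\ a, #|e |: (y :\ a)| == q & a |: ((e |: (y :\ a)) :\ e) == y]
  = [&& y \subset x, #|y| == q, a \in y & e \in (x :\ a) :\: y].
Proof.
move=> ax; apply/idP/idP.
- case/and3P => sub cq /eqP E.
  have ex0 : e \in x :\ a by apply: (fintype.subsetP sub); rewrite setU11.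
  have ea : e != a by move: ex0; rewrite in_setD1 => /andP[].
  have ey : e \notin y by rewrite -E in_setU1 in_setD1 eqxx /= (negbTE ea).
  have eS : e \notin y :\ a by rewrite in_setD1 (negbTE ey) andbF.
  rewrite finset.setU1K // in E.
  have ay : a \in y by rewrite -E setU11.
  rewrite ay finset.in_setD ey ex0 /= andbT.
  apply/andP; split.
    rewrite -E; apply/fintype.subsetP => t; rewrite in_setU1 => /orP[/eqP->//|ty].
    have : t \in x :\ a by apply: (fintype.subsetP sub); rewrite in_setU1 ty orbT.
    by rewrite in_setD1 => /andP[].
  rewrite -E cardsU1 in_setD1 eqxx /=.
  by rewrite cardsU1 eS in cq.
- case/and4P => yx cy ay; rewrite finset.in_setD => /andP[ey ex0].
  have eS : e \notin y :\ a by rewrite in_setD1 (negbTE ey) andbF.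
  rewrite finset.setU1K // finset.setD1K // eqxx andbT.
  apply/andP; split.
    apply/fintype.subsetP => t; rewrite in_setU1 => /orP[/eqP->//|].
    by rewrite !in_setD1 => /andP[-> ty] /=; apply: (fintype.subsetP yx).
  by rewrite cardsU1 eS -(eqP cy) (cardsD1 a y) ay.
Qed.
End Sets.

Section Decomp.
Variable A : finType.
Variable R : realType.

Lemma card_diff (x y : {set A}) a : a \in y -> y \subset x ->
  #|(x :\ a) :\: y| = (#|x| - #|y|)%N.
Proof.
move=> ay yx.
have -> : (x :\ a) :\: y = x :\: y.
  by apply/setP => t; rewrite !inE; case: eqP => // ->; rewrite ay.
by rewrite cardsD; move/finset.setIidPr: yx => ->.
Qed.

Lemma coefs (q N : nat) : (0 < q)%N -> (q < N)%N ->
  let lam : R := ((q * 'C(N.-1, q))%:R)^-1 in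
  let w : R := q%:R / N%:R in
  ('C(N, q)%:R^-1 = q%:R * (lam * (1 - w))) /\
  ('C(N, q)%:R^-1 = (N - q)%:R * (lam * w)).
Proof.
move=> q0 qN lam w.
have H := mul_bin_down N q.
have Cp : (0 < 'C(N.-1, q))%N by rewrite bin_gt0; lia.
have Cq : (0 < 'C(N, q))%N by rewrite bin_gt0; lia.
have NqR : (N - q)%:R != 0 :> R by rewrite pnatr_eq0; lia.
have NR : N%:R != 0 :> R by rewrite pnatr_eq0; lia.
have qR : q%:R != 0 :> R by rewrite pnatr_eq0; lia.
have C'R : 'C(N.-1, q)%:R != 0 :> R by rewrite pnatr_eq0; lia.
have HR : 'C(N, q)%:R = N%:R * 'C(N.-1, q)%:R / (N - q)%:R :> R.
  by rewrite -natrM H natrM mulrAC divff // mul1r.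
rewrite /lam /w HR natrM.
move: NqR; rewrite natrB; last by lia.
move=> NqR.
move: (N%:R) (q%:R) ('C(N.-1, q)%:R) NR qR C'R NqR => n m c nR mR cR nmR.
by split; field; rewrite ?nmR ?nR ?mR ?cR.
Qed.

Lemma decomp (U : Type) (q N : nat) (b : {set A} -> U -> R) (x : {set A}) (a : A) (z : U) :
  a \in x -> #|x| = N -> (0 < q)%N -> (q < N)%N ->
  subsampled q b x z =
  \sum_(k : {set A} * A | (k.1 \subset x :\ a) && (#|k.1| == q) && (k.2 \in k.1))
     (((q * 'C(N.-1, q))%:R)^-1 * mix (q%:R / N%:R) (b k.1) (b (a |: (k.1 :\ k.2))) z).
Proof.
move=> ax xN q0 qN.
have [cA cB] := @coefs q N q0 qN.
set lam : R := ((q * 'C(N.-1, q))%:R)^-1 in cA cB *.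
set w : R := q%:R / N%:R in cA cB *.
rewrite /subsampled xN.
under [RHS]eq_bigr => k _ do rewrite /mix mulrDr.
rewrite big_split /=.
rewrite [LHS](bigID (fun y : {set A} => a \in y)) /= addrC.
congr (_ + _).
- transitivity (\sum_(y : {set A} | (y \subset x :\ a) && (#|y| == q))
     \sum_(c | c \in y) (lam * ((1 - w) * b y z))); last by rewrite pair_big_dep.
  apply: eq_big => y.
    by rewrite subsetD1; case: (y \subset x); case: (a \in y); case: (#|y| == q).
  move=> /andP[/andP[_ /eqP cy] _]; rewrite sumr_const cy -[X in _ = X]mulr_natl.
  by rewrite cA; ring.
- rewrite (reindex_onto (fun j : {set A} * A => (j.2 |: (j.1 :\ a), j.2))
                       (fun k : {set A} * A => (a |: (k.1 :\ k.2), k.2))) /=; last first.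
    move=> [y c] /= /andP[/andP[sy _] cy].
    have ay : a \notin y :\ c.
      by rewrite in_setD1 negb_and; move/subsetD1P: sy => [_ ->]; rewrite orbT.
    by rewrite finset.setU1K // finset.setD1K.
  transitivity (\sum_(y : {set A} | [&& y \subset x, #|y| == q & a \in y])
     \sum_(e | e \in (x :\ a) :\: y) (lam * (w * b y z))); last first.
    rewrite pair_big_dep; apply: eq_big => [[y e]|[y e]] /=.
      rewrite setU11 andbT xpair_eqE eqxx andbT -[RHS]andbA pred_equiv //.
      by rewrite !andbA.
    move=> /andP[/and3P[yx cy ay] ey]; have := @pred_equiv A x a e y q ax.
    by rewrite yx cy ay ey /= => /and3P[_ _ /eqP ->].
  apply: eq_big => [y|y]; first by rewrite andbA.
  move=> /andP[/andP[yx /eqP cy] ay].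
  rewrite sumr_const card_diff // xN cy -[X in _ = X]mulr_natl.
  by rewrite cB; ring.
Qed.
End Decomp.

Section X.
Variable R : realType.
Variable I : finType.
Local Open Scope ereal_scope.
Lemma le_max4 (F : I -> I -> I -> I -> \bar R) (P : I -> I -> I -> I -> bool) i j k l :
  P i j k l -> F i j k l <= \big[maxe/-oo]_i \big[maxe/-oo]_j \big[maxe/-oo]_k
     \big[maxe/-oo]_(l | P i j k l) F i j k l.
Proof.
move=> H.
apply: le_trans (le_bigmax _ _ i).
apply: le_trans (le_bigmax _ _ j).
apply: le_trans (le_bigmax _ _ k).
exact: le_bigmax_cond.
Qed.

Variable A : finType.
Lemma dpm_refl (y : {set A}) : dpm_le 2 y y.
Proof. by left; left. Qed.

Lemma dpm_swap (S : {set A}) e f : e \notin S -> f \notin S -> dpm_le 2 (e |: S) (f |: S).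
Proof.
move=> eS fS; right; exists S; split.
  right; exists (e |: S); split; first by [].
  by right; exists e; rewrite setU11 finset.setU1K.
by left; exists f.
Qed.

Lemma dpm_swap1 (y : {set A}) c f : c \in y -> f \notin y :\ c -> dpm_le 2 y (f |: (y :\ c)).
Proof.
move=> cy fS; have cS : c \notin y :\ c by rewrite in_setD1 eqxx.
by have := @dpm_swap _ c f cS fS; rewrite finset.setD1K.
Qed.
End X.

Lemma mixK (R : realType) (U : Type) (w : R) (f : U -> R) : mix w f f = f.
Proof. by apply: funext => z; rewrite /mix -mulrDl subrK mul1r. Qed.

Lemma mix_ok (R : realType) (d : measure_display) (T : measurableType d) (w : R) (f g : T -> R) :
  0 <= w <= 1 -> measurable_fun setT f -> measurable_fun setT g ->
  (forall z, 0 <= f z) -> (forall z, 0 <= g z) ->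
  measurable_fun setT (mix w f g) /\ forall z, 0 <= mix w f g z.
Proof.
move=> /andP[w0 w1] mf mg f0 g0; split.
  by apply: measurable_funD; apply: measurable_scale.
move=> z; rewrite /mix addr_ge0 // mulr_ge0 //; lra.
Qed.

Lemma final_bound (R : realType) (I : eqType) (s : seq I) (lam : R) (L : I -> \bar R) (M : \bar R) :
  0 <= lam -> \sum_(k <- s) lam = 1 -> (forall k, k \in s -> (0 <= L k <= M)%E) ->
  (\sum_(k <- s) lam%:E * L k <= M)%E.
Proof.
move=> l0 s1 HL.
have [k0 k0s] : exists k, k \in s.
  move: s1 HL; case: s => [|k0 s'] e _.
    by move: e; rewrite big_nil => /eqP; rewrite eq_sym oner_eq0.
  by exists k0; rewrite mem_head.
have M0 : (0 <= M)%E by have /andP[h1 h2] := HL k0 k0s; exact: le_trans h1 h2.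
move: M M0 HL => [r| |//] r0 HL; last by rewrite leey.
apply: (@le_trans _ _ (\sum_(k <- s) lam%:E * r%:E)%E).
  rewrite big_seq [X in (_ <= X)%E]big_seq; apply: lee_sum => k ks.
  by apply: lee_wpmul2l; [rewrite lee_fin | case/andP: (HL k ks)].
under eq_bigr do rewrite -EFinM.
by rewrite sumEFin -mulr_suml s1 mul1r.
Qed.

Theorem mainTheorem12 (R : realType) (d : measure_display) (T : measurableType d)
  (mu : {measure set T -> \bar R}) (A : finType) (q : nat)
  (b : {set A} -> T -> R)
  (hb : forall y : {set A}, #|y| = q -> is_density mu (b y))
  (a : R) (ha : 1 < a) (N : nat) (x x' : {set A})
  (hxN : #|x| = N) (hqx : (q < #|x|)%N) (hqx' : (q < #|x'|)%N)
  (hxx' : subst_rel x x') :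
  let w := q%:R / N%:R in
  (Lambda mu a (subsampled q b x) (subsampled q b x') <=
   \big[maxe/-oo]_(y11 : {set A})
   \big[maxe/-oo]_(y12 : {set A})
   \big[maxe/-oo]_(y21 : {set A})
   \big[maxe/-oo]_(y22 : {set A} |
      `[< [/\ [/\ #|y11| = q, #|y12| = q, #|y21| = q & #|y22| = q],
              y11 = y21,
              dpm_le 2 y11 y12, dpm_le 2 y11 y22 & dpm_le 2 y12 y22] >])
     Lambda mu a (mix w (b y11) (b y12)) (mix w (b y21) (b y22)))%E.
Proof.
cbv zeta.
case: hxx' => a0 [a1 [a0x a1x ex']].
have x0N : #|x :\ a0| = N.-1 by have := cardsD1 a0 x; rewrite a0x hxN; lia.
have a1x0 : a1 \notin x :\ a0 by rewrite in_setD1 (negbTE a1x) andbF.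
have x'N : #|x'| = N by rewrite ex' cardsU1 a1x0 x0N; lia.
have a1x' : a1 \in x' by rewrite ex' setU11.
have x'0 : x' :\ a1 = x :\ a0 by rewrite ex' finset.setU1K.
have [q0|q0] := posnP q.
  subst q.
  have S0 : forall y : {set A}, subsampled 0 b y = b (finset.set0 : {set A}).
    move=> y; apply: funext => z; rewrite /subsampled (big_pred1 (finset.set0 : {set A})).
      by rewrite bin0 invr1 mulr1.
    move=> y'; rewrite /= cards_eq0; case: eqP => [->|_]; last by rewrite andbF.
    by rewrite finset.sub0set.
  rewrite !S0.
  set s0 := (finset.set0 : {set A}).
  apply: (le_trans _ (@le_max4 R _ _ _ s0 s0 s0 s0 _)); rewrite ?mixK //.
  apply/asboolP; split; rewrite ?cards0 //; exact: dpm_refl.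
have qN : (q < N)%N by rewrite -hxN.
pose P := fun k : {set A} * A => (k.1 \subset x :\ a0) && (#|k.1| == q) && (k.2 \in k.1).
pose lam : R := ((q * 'C(N.-1, q))%:R)^-1.
pose w : R := q%:R / N%:R.
pose U := fun k : {set A} * A => if P k then mix w (b k.1) (b (a0 |: k.1 :\ k.2)) else (fun _ => 0).
pose V := fun k : {set A} * A => if P k then mix w (b k.1) (b (a1 |: k.1 :\ k.2)) else (fun _ => 0).
pose s := [seq k <- index_enum ({set A} * A)%type | P k].
have Ex : subsampled q b x = (fun z => \sum_(k <- s) lam * U k z).
  apply: funext => z; rewrite (@decomp _ _ _ _ _ b _ _ z a0x hxN q0 qN) big_filter.
  by apply: eq_bigr => k Pk; rewrite /U (_ : P k).
have Ex' : subsampled q b x' = (fun z => \sum_(k <- s) lam * V k z).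
  apply: funext => z; rewrite (@decomp _ _ _ _ _ b _ _ z a1x' x'N q0 qN) x'0 big_filter.
  by apply: eq_bigr => k Pk; rewrite /V (_ : P k).
rewrite Ex Ex'.
have w01 : 0 <= w <= 1.
  rewrite /w divr_ge0 ?ler0n //= ler_pdivrMr ?mul1r ?ler_nat; [lia|rewrite ltr0n; lia].
have Psz : forall k, P k -> [/\ #|k.1| = q, #|a0 |: k.1 :\ k.2| = q, #|a1 |: k.1 :\ k.2| = q,
    a0 \notin k.1 :\ k.2 & a1 \notin k.1 :\ k.2].
  move=> [y c] /andP[/andP[/= sy /eqP cy] /= cyy].
  have a0y : a0 \notin y :\ c.
    by rewrite in_setD1 negb_and; move/subsetD1P: sy => [_ ->]; rewrite orbT.
  have a1y : a1 \notin y :\ c.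
    apply: contra a1x0 => /= H; apply: (fintype.subsetP sy); move: H; rewrite in_setD1 => /andP[].
    by [].
  have cyc : #|y| = (#|y :\ c|).+1 by rewrite (cardsD1 c y) cyy.
  split => //=; first by rewrite cardsU1 a0y add1n -cyc.
  by rewrite cardsU1 a1y add1n -cyc.
have UV : forall k, [/\ measurable_fun setT (U k), measurable_fun setT (V k),
    forall z, 0 <= U k z & forall z, 0 <= V k z].
  move=> k; rewrite /U /V; case: ifP => Pk; last first.
    by split => // z; exact: measurable_cst.
  have [s1 s2 s3 _ _] := Psz k Pk.
  have [m1 [f1 _]] := hb _ s1.
  have [m2 [f2 _]] := hb _ s2.
  have [m3 [f3 _]] := hb _ s3.
  have [mU U0] := @mix_ok _ _ _ _ _ _ w01 m1 m2 f1 f2.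
  have [mV V0] := @mix_ok _ _ _ _ _ _ w01 m1 m3 f1 f3.
  by split.
have lam0 : 0 < lam.
  rewrite /lam invr_gt0 ltr0n muln_gt0 q0 bin_gt0; lia.
apply: (le_trans (@Lambda_sum R d T mu a _ s lam U V ha lam0 _ _ _ _)).
- by move=> k; case: (UV k).
- by move=> k; case: (UV k).
- by move=> k; case: (UV k).
- by move=> k; case: (UV k).
apply: final_bound; first exact: ltW.
  rewrite big_filter.
  transitivity (\sum_(y : {set A} | (y \subset x :\ a0) && (#|y| == q)) \sum_(c in y) lam);
    first by rewrite pair_big_dep.
  transitivity (\sum_(y in [set y : {set A} | (y \subset x :\ a0) & (#|y| == q)]) (lam *+ q)).
    apply: eq_big => y; first by rewrite inE.
    by move=> /andP[_ /eqP cy]; rewrite sumr_const cy.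
  rewrite sumr_const cards_draws x0N -mulrnA -mulr_natr /lam mulVf //.
  by rewrite pnatr_eq0 -lt0n muln_gt0 q0 bin_gt0; lia.
move=> k; rewrite mem_filter => /andP[Pk _].
apply/andP; split.
  by rewrite /Lambda; apply: integral_ge0 => z _; exact: renyi_ge0.
have [s1 s2 s3 n0 n1] := Psz k Pk.
have cin : k.2 \in k.1 by case/andP: Pk.
rewrite /U /V (_ : P k) //.
apply: (le_trans _ (@le_max4 R _ _ _ k.1 (a0 |: k.1 :\ k.2) k.1 (a1 |: k.1 :\ k.2) _)) => //.
apply/asboolP; split => //.
- exact: dpm_swap1.
- exact: dpm_swap1.
- exact: dpm_swap.
Qed.
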